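(* Let $G$ be a finite group with the supercharacter theory for which $\mathrm{scf}(G)=\mathbb{C}\text{-span}\{\mathbb{1},\mathbf{reg}\}$, and let $\iota,\alpha,\beta\in\mathrm{scf}(G)$ with $\langle\iota,\alpha\rangle=\langle\iota,\beta\rangle=1$. Let $S$ be the antipode of $\mathcal{H}_{(\iota,\alpha,\beta)}$ and $n\ge1$. (Case $\alpha=\beta$.) If $\tau\in\mathrm{scf}(G)$ is nonzero with $\langle\tau,\beta\rangle=0$ and $\mathbb{C}\text{-span}\{\tau,\iota\}=\mathrm{scf}(G)$, then $S(\tau^{\otimes(n-1)}\otimes\chi^{()})=-\tau^{\otimes(n-1)}\otimes\chi^{()}$. (Case $\alpha\ne\beta$.) If $\tau\in\mathrm{scf}(G)$ satisfies $\langle\tau,\alpha\rangle=1$ and $\langle\tau,\beta\rangle=0$, then $S(\tau^{\otimes(n-1)}\otimes\chi^{()})=-(\tau-\iota)^{\otimes(n-1)}\otimes\chi^{()}$.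
   Context: $G$ is a nontrivial finite group; the supercharacter theory has superclasses $\{1\}$ and $G\setminus\{1\}$ and supercharacters $\mathbb{1}$ (trivial character) and $\mathbf{reg}-\mathbb{1}$ ($\mathbf{reg}$ the regular character), so $\mathrm{scf}(G)$ is the space of functions constant on $G\setminus\{1\}$; $\langle\psi,\gamma\rangle=|G|^{-1}\sum_g\psi(g)\overline{\gamma(g)}$. For $n\ge1$, $G^{n-1}=G\times\cdots\times G\times\{1\}$ ($n-1$ copies of $G$), $\mathrm{scf}(G^{n-1})$ is spanned by $\psi_1\otimes\cdots\otimes\psi_{n-1}\otimes\chi^{()}:(g_1,\dots,g_{n-1},1)\mapsto\prod\psi_j(g_j)$ ($\chi^{()}$ trivial character of the trivial group); $\mathrm{scf}(G^{-1}):=\mathbb{C}\chi^\emptyset$. $\mathcal{H}_{(\iota,\alpha,\beta)}=\bigoplus_{n\ge0}\mathrm{scf}(G^{n-1})$ is the graded connected Hopf algebra with unit $\chi^\emptyset$, product $(\gamma_1\otimes\cdots\otimes\gamma_{m-1}\otimes\chi^{()})\cdot(\psi_1\otimes\cdots\otimes\psi_{n-1}\otimes\chi^{()})=\gamma_1\otimes\cdots\otimes\gamma_{m-1}\otimes\iota\otimes\psi_1\otimes\cdots\otimes\psi_{n-1}\otimes\chi^{()}$, coproduct $\Delta(\psi)=\sum_{A\subseteq[n]}\psi^{A}\otimes\psi^{[n]\setminus A}$ for $\psi=\psi_1\otimes\cdots\otimes\psi_{n-1}\otimes\chi^{()}$, where $\psi^\emptyset=\chi^\emptyset$; for nonempty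 $A=\{a_1<\dots<a_k\}$, $\psi^{A}=\lambda_A\,x_{a_1}\otimes\cdots\otimes x_{a_{k-1}}\otimes\chi^{()}$ with $x_{a_i}=\psi_{a_i}$ if $a_{i+1}=a_i+1$, else $\langle\psi_{a_i},\alpha\rangle\iota$, and $\lambda_A=\langle\psi_{a_k},\alpha\rangle$ if $a_k<n$, $1$ if $a_k=n$; $\psi^{[n]\setminus A}$ is the same with $\beta$ in place of $\alpha$. *)

(* Defs.v *)
From HB Require Import structures.
From mathcomp Require Import all_boot all_order all_algebra all_fingroup all_solvable all_field all_character.
Set Implicit Arguments. Unset Strict Implicit. Unset Printing Implicit Defensive.
Import Order.TTheory GRing.Theory Num.Theory.
Local Open Scope ring_scope.

Section ScfHopf.
Variables (gT : finGroupType) (G : {group gT}).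

Definition scf (phi : 'CF(G)) : Prop :=
  forall x y, x \in G -> y \in G -> x != 1%g -> y != 1%g -> phi x = phi y.

(* Value of the pure tensor ps_1 (x) ... (x) ps_{k} (x) chi^() at (z_1,...,z_k,1). *)
Definition tensv (ps : seq 'CF(G)) (zs : seq gT) : algC :=
  \prod_(i < size ps) (nth 0 ps i) (nth 1%g zs i).

Variables (iota alpha beta : 'CF(G)).

(* For psi = ps_1 (x) .. (x) ps_{n-1} (x) chi^() (n = size ps + 1) and a nonempty
   A = s (increasing list of 0-based positions in {0,..,n-1}; position n-1 is the
   last one), lamc c ps s is the scalar lambda_A (with c = alpha, resp. beta)
   and subc c ps s is the list x_{a_1},...,x_{a_{k-1}}. *)
Definition lamc (c : 'CF(G)) (ps : seq 'CF(G)) (s : seq nat) : algC :=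
  let l := last 0%N s in
  if l == size ps then 1 else '[nth 0 ps l, c].

Definition subc (c : 'CF(G)) (ps : seq 'CF(G)) (s : seq nat) : seq 'CF(G) :=
  [seq (if p.2 == p.1.+1 then nth 0 ps p.1 else '[nth 0 ps p.1, c] *: iota)
  | p <- zip s (behead s)].

(* Antipode of the graded connected bialgebra H_(iota,alpha,beta) on pure tensors,
   by the defining recursion  m (S (x) id) Delta = u eps  in positive degree:
     S(psi) = - psi - sum_{emptyset <> A <> [n]} S(psi^A) . psi^{[n]\A}.
   A degree-n element is represented by its function on G^{n-1}, i.e. on
   sequences zs of length n-1; the product of a degree-m element f and a
   degree-(n-m) element g is  zs |-> f(z_1..z_{m-1}) iota(z_m) g(z_{m+1}..z_{n-1}).
   [k] is fuel (at least the degree). *)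
Fixpoint antip (k : nat) (ps : seq 'CF(G)) : seq gT -> algC :=
  match k with
  | 0 => fun _ => 0
  | k'.+1 => fun zs =>
      - tensv ps zs
      - \sum_(A : {set 'I_(size ps).+1} | (A != set0) && (A != setT))
          let s := [seq val i | i <- enum A] in
          let t := [seq val i | i <- enum (~: A)] in
          let m := size s in
          lamc alpha ps s * lamc beta ps t *
          (antip k' (subc alpha ps s) (take m.-1 zs) * iota (nth 1%g zs m.-1)
           * tensv (subc beta ps t) (drop m zs))
  end.

Definition antipode (ps : seq 'CF(G)) : seq gT -> algC := antip (size ps).+1 ps.

End ScfHopf.

(* Main.v *)
Require Import Defs.
From HB Require Import structures.
From mathcomp Require Import all_boot all_order all_algebra all_fingroup all_solvable all_field all_character.
From mathcomp Require Import zify ring.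
Import Order.TTheory GRing.Theory Num.Theory.
Local Open Scope ring_scope.


Lemma last_iota (x n : nat) : last 0%N (iota x n.+1) = (x + n)%N.
Proof.
elim: n x => [|n IH] x /=; first by rewrite addn0.
by have := IH x.+1; rewrite /= => ->; rewrite addSnnS.
Qed.

Lemma gap_iota (t : seq nat) (x : nat) :
  all (fun p => p.2 == p.1.+1) (zip (x :: t) t) -> x :: t = iota x (size t).+1.
Proof.
elim: t x => [|y t IH] x //= /andP [/eqP Hy H]; subst y.
by rewrite (IH x.+1 H).
Qed.

Lemma val_enum_set n (A : {set 'I_n}) (P : pred nat) :
  (forall i : 'I_n, (i \in A) = P i) -> [seq val i | i <- enum A] = filter P (iota 0 n).
Proof.
move=> HA; rewrite -val_enum_ord filter_map /enum_mem -enumT.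
congr map; rewrite [X in _ = filter _ X](eq_filter (a2 := predT)) // filter_predT.
by apply: eq_filter => i; rewrite /= HA.
Qed.

Lemma filter_le_iota j k : (j < k)%N ->
  filter (fun x => x <= j)%N (iota 0 k.+1) = iota 0 j.+1.
Proof.
move=> jk; have -> : k.+1 = (j.+1 + (k - j))%N by rewrite addSn subnKC // ltnW.
rewrite iotaD filter_cat.
rewrite (eq_in_filter (a2 := predT)); last by move=> x; rewrite mem_iota => /andP [_ H]; rewrite -ltnS.
rewrite filter_predT (eq_in_filter (a2 := pred0)) ?filter_pred0 ?cats0 //.
by move=> x; rewrite mem_iota => /andP [H _]; rewrite add0n in H; rewrite leqNgt H.
Qed.

Lemma filter_gt_iota j k : (j < k)%N ->
  filter (fun x => ~~ (x <= j))%N (iota 0 k.+1) = iota j.+1 (k - j.+1).+1.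
Proof.
move=> jk; have -> : k.+1 = (j.+1 + (k - j))%N by rewrite addSn subnKC // ltnW.
rewrite iotaD filter_cat.
rewrite (eq_in_filter (a2 := pred0)); last by move=> x; rewrite mem_iota => /andP [_ H]; rewrite -ltnS H.
rewrite filter_pred0 /= (eq_in_filter (a2 := predT)) ?filter_predT; first by rewrite add0n -subnSK.
by move=> x; rewrite mem_iota => /andP [H _]; rewrite add0n in H; rewrite -ltnNge.
Qed.

Lemma map_nth_nseq (T : Type) (d x : T) k a n : (a + n <= k)%N ->
  [seq nth d (nseq k x) i | i <- iota a n] = nseq n x.
Proof.
elim: n a => [|n IH] a //= H.
rewrite nth_nseq (leq_trans _ H) ?leq_addr //; last by rewrite addnS ltnS leq_addr.
by rewrite IH // addSnnS.
Qed.

Section Main.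
Variables (gT : finGroupType) (G : {group gT}) (io alpha beta tau : 'CF(G)).

Lemma tensv_nseq m (c : 'CF(G)) (zs : seq gT) : tensv (nseq m c) zs = \prod_(i < m) c (nth 1%g zs i).
Proof.
rewrite /tensv size_nseq; apply: eq_bigr => i _; by rewrite nth_nseq ltn_ord.
Qed.

Lemma tensv0 (ps : seq 'CF(G)) (zs : seq gT) : 0 \in ps -> tensv ps zs = 0.
Proof.
move=> H; rewrite /tensv (bigD1 (Ordinal (etrans (index_mem 0 ps) H))) //=.
by rewrite nth_index // cfunE mul0r.
Qed.

Lemma lamc0 (c : 'CF(G)) k s : '[tau, c] = 0 -> last 0%N s != k -> lamc c (nseq k tau) s = 0.
Proof.
move=> Hc H; rewrite /lamc size_nseq (negbTE H) nth_nseq.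
by case: ifP => _; rewrite ?Hc ?cfdot0l.
Qed.

Lemma lamc0' (c : 'CF(G)) k s : '[tau, c] = 0 -> last 0%N s != size (nseq k tau) -> lamc c (nseq k tau) s = 0.
Proof. by move=> Hc H; apply: lamc0 => //; rewrite size_nseq in H. Qed.

Lemma subc0 (c : 'CF(G)) k s : '[tau, c] = 0 ->
  ~~ all (fun p => p.2 == p.1.+1) (zip s (behead s)) -> 0 \in subc io c (nseq k tau) s.
Proof.
move=> Hc /allPn [p Hp Hne]; apply/mapP; exists p => //.
by rewrite (negbTE Hne) nth_nseq; case: ifP => _; rewrite ?Hc ?cfdot0l scale0r.
Qed.

Lemma subc_iota (c : 'CF(G)) (ps : seq 'CF(G)) a n :
  subc io c ps (iota a n.+1) = [seq nth 0 ps i | i <- iota a n].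
Proof.
elim: n a => [|n IH] a //=.
by rewrite -IH /subc /= eqxx.
Qed.


Definition pre {k} (j : 'I_k) : {set 'I_k.+1} := [set i : 'I_k.+1 | (i <= j)%N].

Lemma pre_inj k : injective (@pre k).
Proof.
move=> j1 j2 /setP H; apply: val_inj; apply/eqP; rewrite eqn_leq.
have := H (widen_ord (leqnSn k) j1); have := H (widen_ord (leqnSn k) j2).
by rewrite !inE /= !leqnn => -> <-.
Qed.

Lemma pre_char k (A : {set 'I_k.+1}) : A != set0 -> A != setT ->
  last 0%N [seq val i | i <- enum (~: A)] = k ->
  all (fun p => p.2 == p.1.+1)
    (zip [seq val i | i <- enum (~: A)] (behead [seq val i | i <- enum (~: A)])) ->
  A \in [set pre j | j : 'I_k].
Proof.
move=> A0 AT.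
have Hmem : forall i : 'I_k.+1, (i \in ~: A) = (val i \in [seq val i | i <- enum (~: A)]).
  by move=> i; rewrite mem_map ?mem_enum //; exact: val_inj.
move: Hmem; case: [seq val i | i <- enum (~: A)] => [|x t] Hmem.
  case/negP: AT; apply/eqP/setP => i; have := Hmem i.
  by rewrite !inE in_nil => /negbFE ->.
move=> Hlast Hall; rewrite (@gap_iota t x Hall) in Hmem Hlast.
rewrite last_iota in Hlast.
have Hi : forall i : 'I_k.+1, (i \in A) = (i < x)%N.
  move=> i; have := Hmem i; rewrite inE mem_iota addnS Hlast ltn_ord andbT.
  by rewrite ltnNge => <-; rewrite negbK.
have x0 : (0 < x)%N.
  case: x Hi {Hmem Hlast Hall} => // Hi; case/negP: A0; apply/eqP/setP => i.
  by rewrite Hi inE.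
have xk : (x.-1 < k)%N by lia.
apply/imsetP; exists (Ordinal xk) => //; apply/setP => i.
rewrite Hi inE /=; apply/idP/idP; lia.
Qed.
End Main.

Section Main2.
Variables (gT : finGroupType) (G : {group gT}) (io alpha beta tau : 'CF(G)).
Lemma main_ne : '[tau, alpha] = 1 -> '[tau, beta] = 0 ->
  forall f k (zs : seq gT), (k < f)%N ->
  antip io alpha beta f (nseq k tau) zs = - tensv (nseq k (tau - io)) zs.
Proof.
move=> Ha Hb; elim=> [|f IH] k zs // Hk.
rewrite /= size_nseq.
rewrite (bigID (fun A => A \in [set pre j | j : 'I_k])) /=.
rewrite [X in _ - (_ + X)]big1 ?addr0; last first.
  move=> A /andP [/andP [A0 AT] HA].
  case: (eqVneq (last 0%N [seq val i | i <- enum (~: A)]) k) => Hl; last first.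
    by rewrite (@lamc0 _ _ tau beta k _ Hb Hl) mulr0 mul0r.
  case: (boolP (all (fun p => p.2 == p.1.+1) (zip [seq val i | i <- enum (~: A)] (behead [seq val i | i <- enum (~: A)])))) => Hall.
    by rewrite (@pre_char k A A0 AT Hl Hall) in HA.
  by rewrite (@tensv0 _ _ _ _ (@subc0 _ _ io tau beta k _ Hb Hall)) !mulr0.
rewrite (eq_bigl (fun A => A \in [set pre j | j : 'I_k])); last first.
  move=> A; case: (boolP (A \in _)) => HA; rewrite ?andbF // andbT.
  case/imsetP: HA => j _ ->; apply/andP; split.
    by apply/set0Pn; exists ord0; rewrite inE.
  by apply/negP => /eqP/setP/(_ ord_max); rewrite !inE /= leqNgt ltn_ord.
rewrite big_imset /=; last by move=> ? ? _ _; apply: pre_inj.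
have Es (j : 'I_k) : [seq val i | i <- enum (pre j)] = iota 0 (nat_of_ord j).+1.
  rewrite (@val_enum_set _ _ (fun x => x <= j)%N) ; last by move=> i; rewrite inE.
  exact: filter_le_iota.
have Et (j : 'I_k) : [seq val i | i <- enum (~: pre j)] = iota j.+1 (k - j.+1).+1.
  rewrite (@val_enum_set _ _ (fun x => ~~ (x <= j))%N) ; last by move=> i; rewrite !inE.
  exact: filter_gt_iota.
pose z i := nth 1%g zs i.
pose P j := \prod_(i < j) (tau - io) (z i).
pose Q j := \prod_(i < k - j) tau (z (j + i)%N).
rewrite (eq_bigr (fun j : 'I_k => - (P j * io (z j) * Q j.+1))); last first.
  move=> j _; rewrite Es Et size_iota succnK !subc_iota !map_nth_nseq; last 2 first.
  - have := ltn_ord j; lia.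
  - have := ltn_ord j; lia.
  rewrite /lamc !last_iota !size_nseq add0n subnKC // eqxx.
  rewrite (_ : (j == k :> nat) = false); last by apply/negbTE; rewrite neq_ltn ltn_ord.
  rewrite nth_nseq ltn_ord Ha mul1r mul1r.
  rewrite IH; last by have := ltn_ord j; lia.
  rewrite !tensv_nseq !mulNr; congr (- (_ * _ * _)).
    by apply: eq_bigr => i _; rewrite nth_take.
  by apply: eq_bigr => i _; rewrite nth_drop.
rewrite sumrN opprK.
have Htel : \sum_(i in 'I_k) P i * io (z i) * Q i.+1 = P 0%N * Q 0%N - P k * Q k.
  rewrite -(big_mkord xpredT (fun i => P i * io (z i) * Q i.+1)).
  rewrite (telescope_sumr_eq (fun j => - (P j * Q j))) ?opprK 1?addrC //.
  move=> j /andP [_ jk].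
  rewrite /P /Q big_ord_recr /= !cfunE.
  have -> : (k - j = (k - j.+1).+1)%N by lia.
  rewrite big_ord_recl /= addn0.
  have -> : \prod_(i < k - j.+1) tau (z (j + bump 0 i)%N) = \prod_(i < k - j.+1) tau (z (j.+1 + i)%N).
    by apply: eq_bigr => i _; rewrite /bump add1n addnS.
  rewrite ?cfunE.
  ring.
rewrite Htel /P /Q subnn !big_ord0 mulr1 mul1r !tensv_nseq subn0.

by rewrite addrA addNr add0r.
Qed.
End Main2.

Lemma last_in n (A : {set 'I_n}) : A != set0 ->
  exists2 i, i \in A & val i = last 0%N [seq val i | i <- enum A].
Proof.
case/set0Pn => a Ha.
have : last 0%N [seq val i | i <- enum A] \in [seq val i | i <- enum A].
  have : val a \in [seq val i | i <- enum A] by apply: map_f; rewrite mem_enum.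
  case: [seq val i | i <- enum A] => // x s _; exact: mem_last.
by case/mapP => i Hi ->; exists i => //; rewrite mem_enum in Hi.
Qed.

Section Main3.
Variables (gT : finGroupType) (G : {group gT}) (io alpha beta tau : 'CF(G)).
Lemma main_eq : '[tau, alpha] = 0 -> '[tau, beta] = 0 -> forall k (zs : seq gT),
  antip io alpha beta k.+1 (nseq k tau) zs = - tensv (nseq k tau) zs.
Proof.
move=> Ha Hb k zs; rewrite /= big1 ?subr0 // => A /andP [A0 AT].
case: (eqVneq (last 0%N [seq val i | i <- enum A]) (size (nseq k tau))) => Hs; last first.
  by rewrite (@lamc0' _ _ tau alpha k _ Ha Hs) !mul0r.
case: (eqVneq (last 0%N [seq val i | i <- enum (~: A)]) (size (nseq k tau))) => Ht; last first.
  by rewrite (@lamc0' _ _ tau beta k _ Hb Ht) mulr0 mul0r.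
have [i Hi Ei] := @last_in _ A A0.
have AT' : ~: A != set0.
  apply: contra AT => /eqP/setP H; apply/eqP/setP => x.
  by move/(_ x): H; rewrite !inE => /negbFE.
have [i' Hi' Ei'] := @last_in _ _ AT'.
have : i = i' by apply: val_inj; rewrite Ei Ei' Hs Ht.
by move=> E; rewrite E in Hi; rewrite inE Hi in Hi'.
Qed.
End Main3.

Theorem mainTheorem11 (gT : finGroupType) (G : {group gT})
    (iota alpha beta : 'CF(G)) (n : nat) :
  (1 < #|G|)%N ->
  scf iota -> scf alpha -> scf beta ->
  '[iota, alpha] = 1 -> '[iota, beta] = 1 ->
  (1 <= n)%N ->
  (alpha = beta ->
   forall tau : 'CF(G), scf tau -> tau != 0 -> '[tau, beta] = 0 ->
   (forall phi : 'CF(G), scf phi -> exists a b : algC, phi = a *: tau + b *: iota) ->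
   forall zs : seq gT, size zs = n.-1 -> all (fun z => z \in G) zs ->
   antipode iota alpha beta (nseq n.-1 tau) zs = - tensv (nseq n.-1 tau) zs)
  /\
  (alpha != beta ->
   forall tau : 'CF(G), scf tau -> '[tau, alpha] = 1 -> '[tau, beta] = 0 ->
   forall zs : seq gT, size zs = n.-1 -> all (fun z => z \in G) zs ->
   antipode iota alpha beta (nseq n.-1 tau) zs = - tensv (nseq n.-1 (tau - iota)) zs).
Proof.
move=> _ _ _ _ _ _ _; split.
  move=> Eab tau _ _ Htb _ zs _ _; rewrite /antipode size_nseq.
  by apply: main_eq => //; rewrite Eab.
move=> _ tau _ Hta Htb zs _ _; rewrite /antipode size_nseq.
exact: main_ne.
Qed.
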